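(* Let $D$ be a nonempty subset of $\mathbb{R}^n$, let $\varepsilon\in\,]0,1[$, and let $\Lambda$ be a symmetric linear operator on $\mathbb{R}^n$ such that $$\bar\beta\,\mathrm{Id}\succeq \Lambda\succeq \underline{\beta}\,\mathrm{Id},\qquad \bar\beta,\underline\beta\in[\varepsilon,1-\varepsilon].$$ Let $R:D\to\mathbb{R}^n$ be nonexpansive, and define $T_\Lambda:D\to\mathbb{R}^n$ by $T_\Lambda \coloneqq (\mathrm{Id}-\Lambda)+\Lambda R$. Then $T_\Lambda$ is $\bar\beta$-averaged in the metric induced by $\Lambda^{-1}$, i.e., for all $x,y\in D$, $$\|T_\Lambda(x)-T_\Lambda(y)\|_{\Lambda^{-1}}^2\le \|x-y\|_{\Lambda^{-1}}^2-\frac{1-\bar\beta}{\bar\beta}\,\big\|(\mathrm{Id}-T_\Lambda)(x)-(\mathrm{Id}-T_\Lambda)(y)\big\|_{\Lambda^{-1}}^2 .$$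
   Context: For a symmetric positive-definite matrix $W$, $\|x\|_W^2\coloneqq\langle x,Wx\rangle$. An operator $R$ is nonexpansive if $\|R(x)-R(y)\|\le\|x-y\|$ for all $x,y$ in its domain. $A\succeq B$ means $A-B$ is positive semidefinite. Operators $T_\Lambda$ of this form are called operator-weighted averaged operators. *)

(* Defs.v *)
(* R^n is 'cV[R]_n over an arbitrary real closed field R
   (which covers the real numbers; only algebraic/order facts are needed). *)
From HB Require Import structures.
From mathcomp Require Import all_boot all_order all_algebra.
Set Implicit Arguments. Unset Strict Implicit. Unset Printing Implicit Defensive.
Import Order.TTheory GRing.Theory Num.Theory.
Local Open Scope ring_scope.

Definition dotv (R : ringType) (n : nat) (x y : 'cV[R]_n) : R := (x^T *m y) 0 0.

Definition normv (R : rcfType) (n : nat) (x : 'cV[R]_n) : R := Num.sqrt (dotv x x).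

Definition sqnormW (R : ringType) (n : nat) (W : 'M[R]_n) (x : 'cV[R]_n) : R :=
  dotv x (W *m x).

Definition psd_ge (R : numDomainType) (n : nat) (A B : 'M[R]_n) : Prop :=
  forall v : 'cV[R]_n, 0 <= dotv v ((A - B) *m v).

Definition nonexpansive_on (R : rcfType) (n : nat) (D : pred 'cV[R]_n)
  (Rop : 'cV[R]_n -> 'cV[R]_n) : Prop :=
  forall x y, x \in D -> y \in D -> normv (Rop x - Rop y) <= normv (x - y).

Definition T_Lambda (R : ringType) (n : nat) (Lam : 'M[R]_n)
  (Rop : 'cV[R]_n -> 'cV[R]_n) (x : 'cV[R]_n) : 'cV[R]_n :=
  (x - Lam *m x) + Lam *m Rop x.

(* Main.v *)
Require Import Defs.
From HB Require Import structures.
From mathcomp Require Import all_boot all_order all_algebra.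
From mathcomp Require Import ring lra.
Import Order.TTheory GRing.Theory Num.Theory.
Local Open Scope ring_scope.

Section Aux.
Variable R : rcfType.
Variable n : nat.
Implicit Types (x y z : 'cV[R]_n) (A : 'M[R]_n).

Lemma dotvDr x y z : dotv x (y + z) = dotv x y + dotv x z.
Proof. by rewrite /dotv mulmxDr mxE. Qed.
Lemma dotvBr x y z : dotv x (y - z) = dotv x y - dotv x z.
Proof. by rewrite /dotv mulmxBr !mxE. Qed.
Lemma dotvC x y : dotv x y = dotv y x.
Proof. by rewrite /dotv -{1}(trmxK (x^T *m y)) trmx_mul trmxK [in LHS]mxE. Qed.
Lemma dotvDl x y z : dotv (y + z) x = dotv y x + dotv z x.
Proof. by rewrite dotvC dotvDr !(dotvC x). Qed.
Lemma dotvBl x y z : dotv (y - z) x = dotv y x - dotv z x.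
Proof. by rewrite dotvC dotvBr !(dotvC x). Qed.
Lemma dotvMl A x y : dotv (A *m x) y = dotv x (A^T *m y).
Proof. by rewrite /dotv trmx_mul mulmxA. Qed.
Lemma dotvZr (a : R) x y : dotv x (a *: y) = a * dotv x y.
Proof. by rewrite /dotv -scalemxAr mxE. Qed.
Lemma dotv_sum x : dotv x x = \sum_k x k 0 ^+ 2.
Proof. by rewrite /dotv mxE; apply: eq_bigr => k _; rewrite mxE expr2. Qed.
Lemma dotv_ge0 x : 0 <= dotv x x.
Proof. by rewrite dotv_sum; apply: sumr_ge0 => k _; apply: sqr_ge0. Qed.
Lemma dotv_eq0 x : dotv x x = 0 -> x = 0.
Proof.
rewrite dotv_sum => /psumr_eq0P H; apply/matrixP => i j.
rewrite (ord1 j) mxE; apply/eqP; rewrite -sqrf_eq0; apply/eqP.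
by apply: H => // k _; apply: sqr_ge0.
Qed.
Lemma expand1 (u r : 'cV[R]_n) : dotv (u - r) (u - r) = dotv u u - 2 * dotv u r + dotv r r.
Proof. rewrite !dotvBl !dotvBr (dotvC r u); ring. Qed.
Lemma expand2 (u r : 'cV[R]_n) : dotv u (u - r) = dotv u u - dotv u r.
Proof. by rewrite dotvBr. Qed.
End Aux.
Arguments dotvC {R n}.
Arguments dotv_eq0 {R n}.

Theorem proposition1 (R : rcfType) (n : nat) (D : pred 'cV[R]_n)
  (eps betabar betaund : R) (Lam : 'M[R]_n) (Rop : 'cV[R]_n -> 'cV[R]_n) :
  (exists x0, x0 \in D) ->
  0 < eps -> eps < 1 ->
  Lam^T = Lam ->
  psd_ge (betabar%:M) Lam ->
  psd_ge Lam (betaund%:M) ->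
  eps <= betabar -> betabar <= 1 - eps ->
  eps <= betaund -> betaund <= 1 - eps ->
  nonexpansive_on D Rop ->
  forall x y, x \in D -> y \in D ->
    sqnormW (invmx Lam) (T_Lambda Lam Rop x - T_Lambda Lam Rop y)
    <= sqnormW (invmx Lam) (x - y)
       - (1 - betabar) / betabar *
         sqnormW (invmx Lam) ((x - T_Lambda Lam Rop x) - (y - T_Lambda Lam Rop y)).
Proof.
move=> _ e0 e1 Lsym Hbar Hund eb1 eb2 eu1 eu2 Hne x y xD yD.
have bu0 : 0 < betaund by lra.
have bb0 : 0 < betabar by lra.
have Lunit : Lam \in unitmx.
  rewrite -row_free_unit -kermx_eq0; apply/eqP/matrixP => i j.
  set v := (row i (kermx Lam))^T.
  have Lv : Lam *m v = 0.
    by rewrite -{1}Lsym -trmx_mul -row_mul mulmx_ker row0 trmx0.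
  have := Hund v; rewrite mulmxBl Lv mul_scalar_mx dotvBr dotvZr => H.
  have hv : dotv v v = 0.
    have h0 : dotv v 0 = 0 by rewrite /dotv mulmx0 mxE.
    have := (@dotv_ge0 _ _ v); rewrite h0 in H; nra.
  have := dotv_eq0 _ hv => /matrixP /(_ j 0).
  by rewrite /v !mxE.
set W := invmx Lam.
have WL : W *m Lam = 1%:M by rewrite mulVmx.
have LW : Lam *m W = 1%:M by rewrite mulmxV.
set u := x - y.
set d := u - (Rop x - Rop y).
have eT : T_Lambda Lam Rop x - T_Lambda Lam Rop y = u - Lam *m d.
  rewrite /T_Lambda /d /u !mulmxBr; apply/matrixP => i j; rewrite !mxE; ring.
have eI : (x - T_Lambda Lam Rop x) - (y - T_Lambda Lam Rop y) = Lam *m d.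
  rewrite /T_Lambda /d /u !mulmxBr; apply/matrixP => i j; rewrite !mxE; ring.
have hq : dotv d d <= 2 * dotv u d.
  have := Hne x y xD yD; rewrite /normv ler_sqrt ?(@dotv_ge0 _ _ _) // => H.
  rewrite /d expand1 expand2; lra.
clearbody u d.
rewrite eT eI /sqnormW (mulmxBr W) !mulmxA WL !mul1mx.
rewrite !dotvBl !dotvBr dotvMl Lsym mulmxA LW mul1mx.
set a := dotv (Lam *m d) d.
set p := dotv u d.
set q := dotv d d.
have hdu : dotv d u = p by rewrite /p dotvC.
rewrite hdu.
have ha : a <= betabar * q.
  have := Hbar d; rewrite mulmxBl mul_scalar_mx dotvBr dotvZr.
  by rewrite /a dotvMl Lsym dotvC -/q; lra.
have key : a - 2 * betabar * p <= 0.
  have h2 : 0 <= 2 * p - q by rewrite subr_ge0.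
  have := mulr_ge0 (ltW bb0) h2; nra.
rewrite -subr_ge0.
have -> : dotv u (W *m u) - (1 - betabar) / betabar * a -
   (dotv u (W *m u) - p - (p - a)) = (2 * betabar * p - a) / betabar.
  by field; lra.
apply: divr_ge0; lra.
Qed.
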